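(* There is a family of instances, one for each number of jobs $n$, for which $\frac{OPT_{\mathrm{SR}}}{OPT}=\Omega(n)$, where $OPT$ is the optimal objective value of problem MR and $OPT_{\mathrm{SR}}$ is the optimal objective value of MR restricted to the Smith Rule order.
   Context: Problem MR. There are jobs $\mathcal J=\{1,\dots,n\}$ and processors $\mathcal P=\{1,\dots,m\}$. Job $j$ has weight $w_j>0$, release date $r_j\ge0$, and a set of Map tasks and a set of Reduce tasks, preassigned to processors with at most one task of each job per processor; $T_{i,j}$ is the task of job $j$ on processor $i$, with work $v_{i,j}\ge0$. A schedule gives each task a start time and a constant speed $s_{i,j}>0$; the task runs non-preemptively for $v_{i,j}/s_{i,j}$ time units and uses energy $v_{i,j}s_{i,j}^{\beta-1}$, where $\beta>1$ is a fixed constant. Feasibility: each processor runs at most one task at a time; tasks of job $j$ start no earlier than $r_j$; Reduce tasks of job $j$ start only after all Map tasks of job $j$ complete; total energy at most a given budget $E>0$. $C_j$ is the maximum completion time of the tasks of job $j$; the objective is to minimize $\sum_j w_jC_j$. Given an order $\sigma$ of the jobs, MR restricted to $\sigma$ is MR with the additional requirement that on every processor the tasks are executed in the order $\sigma$ of their jobs (the same order for all processors). The Smith Rule order is any order $\sigma$ such that $\frac{w_j}{\sum_{i}v_{i,j}}>\frac{w_{j'}}{\sum_i v_{i,j'}}$ implies $j$ precedes $j'$. *)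

(* Defs.v *)
From HB Require Import structures.
From mathcomp Require Import all_boot all_order all_algebra all_fingroup.
From mathcomp Require Import all_classical all_reals all_analysis.
Set Implicit Arguments. Unset Strict Implicit. Unset Printing Implicit Defensive.
Import Order.TTheory GRing.Theory Num.Theory.
Local Open Scope classical_set_scope.
Local Open Scope ring_scope.

Inductive task_kind := MapTask | ReduceTask.


(* An instance of MR with n jobs.  kind i j = Some k iff job j has a task
   (of kind k) on processor i; at most one task per (processor, job). *)
Record instance (R : realType) (n : nat) := Instance {
  nproc : nat;
  weight : 'I_n -> R;
  release : 'I_n -> R;
  kind : 'I_nproc -> 'I_n -> option task_kind;
  work : 'I_nproc -> 'I_n -> R;
  budget : R }.

Arguments nproc {R n} _.
Arguments weight {R n} _ _.
Arguments release {R n} _ _.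
Arguments kind {R n} _ _ _.
Arguments work {R n} _ _ _.
Arguments budget {R n} _.

Section MR.
Variables (R : realType) (n : nat) (beta : R) (I : instance R n).

Definition has_task (i : 'I_(nproc I)) (j : 'I_n) : bool :=
  if kind I i j is Some _ then true else false.
Definition is_map (i : 'I_(nproc I)) (j : 'I_n) : bool :=
  if kind I i j is Some MapTask then true else false.
Definition is_reduce (i : 'I_(nproc I)) (j : 'I_n) : bool :=
  if kind I i j is Some ReduceTask then true else false.

Definition total_work (j : 'I_n) : R := \sum_(i | has_task i j) work I i j.

(* Validity of an instance: w_j > 0, r_j >= 0, v_{i,j} >= 0, E > 0, and
   every job has positive total work (so the Smith ratio is well defined). *)
Definition valid_instance : Prop :=
  [/\ forall j, 0 < weight I j,
      forall j, 0 <= release I j,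
      forall i j, has_task i j -> 0 <= work I i j,
      forall j, 0 < total_work j
    & 0 < budget I].

Record schedule := Schedule {
  start : 'I_(nproc I) -> 'I_n -> R;
  speed : 'I_(nproc I) -> 'I_n -> R }.

Definition completion (S : schedule) i j : R := start S i j + work I i j / speed S i j.

Definition energy (S : schedule) : R :=
  \sum_(i < nproc I) \sum_(j | has_task i j) work I i j * (speed S i j) `^ (beta - 1).

Definition feasible (S : schedule) : Prop :=
  [/\ (forall i j, has_task i j -> 0 < speed S i j),
      (forall i j j', j != j' -> has_task i j -> has_task i j' ->
          completion S i j <= start S i j' \/ completion S i j' <= start S i j),
      (forall i j, has_task i j -> release I j <= start S i j),
      (forall i i' j, is_reduce i j -> is_map i' j -> completion S i' j <= start S i j)
    & energy S <= budget I].

Definition job_completion (S : schedule) (j : 'I_n) : R :=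
  \big[Order.max/0]_(i | has_task i j) completion S i j.

Definition objective (S : schedule) : R := \sum_j weight I j * job_completion S j.

(* An order of the jobs: sigma j is the position of job j. *)
Definition respects_order (sigma : {perm 'I_n}) (S : schedule) : Prop :=
  forall i j j', has_task i j -> has_task i j' -> (sigma j < sigma j')%N ->
    completion S i j <= start S i j'.

Definition OPT : R := inf [set objective S | S in [set S | feasible S]].

Definition OPT_restricted (sigma : {perm 'I_n}) : R :=
  inf [set objective S | S in [set S | feasible S /\ respects_order sigma S]].

Definition smith_order (sigma : {perm 'I_n}) : Prop :=
  forall j j', weight I j' / total_work j' < weight I j / total_work j ->
    (sigma j < sigma j')%N.

End MR.

(* Main.v *)
Require Import Defs.
From HB Require Import structures.
From mathcomp Require Import all_boot all_order all_algebra all_fingroup.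
From mathcomp Require Import all_classical all_reals all_analysis.
From mathcomp Require Import lra ring.
Import Order.TTheory GRing.Theory Num.Theory.
Local Open Scope ring_scope.

Definition kindf (n : nat) (i j : 'I_n) : option task_kind :=
  if (val j == 0%N) || (i == j) then Some MapTask else None.
Definition workf (R : realType) (n : nat) (i j : 'I_n) : R :=
  if val j == 0%N then (2 * n%:R)^-1 else 1.
Definition inst (R : realType) (n : nat) : instance R n :=
  @Instance R n n (fun _ => 1) (fun j => if val j == 0%N then n%:R else 0)
    (@kindf n) (@workf R n)
    (1 + \sum_(i < n) \sum_(j < n | (val j == 0%N) || (i == j)) @workf R n i j).

Section Proofs.
Variables (R : realType) (n : nat) (beta : R).
Hypothesis n0 : (0 < n)%N.
Local Notation I := (inst R n).

Lemma has_taskE (i j : 'I_n) : @has_task R n I i j = (val j == 0%N) || (i == j).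
Proof. by rewrite /has_task /= /kindf; case: ifP. Qed.

Lemma is_reduceF (i j : 'I_n) : @is_reduce R n I i j = false.
Proof. by rewrite /is_reduce /= /kindf; case: ifP. Qed.

Lemma nR_gt0 : 0 < n%:R :> R.
Proof. by rewrite ltr0n. Qed.

Lemma b_gt0 : 0 < (2 * n%:R)^-1 :> R.
Proof. by rewrite invr_gt0 mulr_gt0 // nR_gt0. Qed.

Lemma work_ge0 (i j : 'I_n) : 0 <= work I i j.
Proof. rewrite /= /workf; case: ifP => _ //; exact: ltW b_gt0. Qed.

Lemma b_le1 : (2 * n%:R)^-1 <= 1 :> R.
Proof.
rewrite invf_le1 ?mulr_gt0 ?nR_gt0 //.
have : 1 <= n%:R :> R by rewrite ler1n.
lra.
Qed.

Lemma total_workE (j : 'I_n) :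
  total_work I j = if val j == 0%N then 2^-1 else 1.
Proof.
rewrite /total_work (eq_bigl _ _ (fun i => has_taskE i j)).
case: ifP => hj.
  rewrite (eq_bigl xpredT) => [|i] //.
  rewrite (eq_bigr (fun _ => (2 * n%:R)^-1)) => [|i _]; last by rewrite /= /workf hj.
  rewrite sumr_const card_ord -mulr_natr.
  have := nR_gt0; move=> h; field; lra.
rewrite (eq_bigl (pred1 j)) => [|i] //.
by rewrite big_pred1_eq /= /workf hj.
Qed.

Lemma energy_le (S : schedule I) : (forall i j, speed S i j = 1) ->
  energy beta S <= budget I.
Proof.
move=> hs; rewrite /energy /=.
under eq_bigr => i _ do (under eq_bigr => j _ do rewrite hs powR1 mulr1;
  rewrite (eq_bigl _ _ (fun j => has_taskE i j))).
by rewrite lerDr.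
Qed.

Lemma valid : valid_instance I.
Proof.
split => //=.
- by move=> j; case: ifP => _ //; exact: ltW nR_gt0.
- by move=> i j _; exact: work_ge0.
- by move=> j; rewrite total_workE; case: ifP.
- rewrite ltr_pwDl //.
  apply: sumr_ge0 => i _; apply: sumr_ge0 => j _; exact: (work_ge0 i j).
Qed.

Lemma jc_ge (S : schedule I) (i j : 'I_n) : @has_task R n I i j ->
  0 < speed S i j -> start S i j <= job_completion S j.
Proof.
move=> hij hs; rewrite /job_completion (bigD1 i) //= le_max; apply/orP; left.
rewrite /completion lerDl divr_ge0 //; [exact: work_ge0 | exact: ltW].
Qed.

Lemma jc_le (S : schedule I) (j : 'I_n) x : 0 <= x ->
  (forall i, @has_task R n I i j -> completion S i j <= x) -> job_completion S j <= x.
Proof.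
move=> x0 h; rewrite /job_completion; elim/big_ind: _ => //.
by move=> a b ha hb; rewrite ge_max ha hb.
Qed.

Lemma obj_ge (S : schedule I) x : (forall j, x <= job_completion S j) ->
  x * n%:R <= objective S.
Proof.
move=> h; rewrite /objective.
apply: le_trans (_ : \sum_(j < n) x <= _); first by rewrite sumr_const card_ord mulr_natr.
by apply: ler_sum => j _; rewrite /= mul1r.
Qed.

Lemma OPT_ge : n%:R <= OPT beta I /\ OPT beta I <= 2 * n%:R + 1.
Proof.
pose S := @Schedule R n I (fun _ j => if val j == 0%N then n%:R else 0) (fun _ _ => 1).
have lb : forall T : schedule I, feasible beta T -> n%:R <= objective T.
  move=> T [hs _ hr _ _].
  have := @obj_ge T 0; rewrite mul0r => h0.
  have jc0 : forall j, 0 <= job_completion T j.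
    move=> j; rewrite /job_completion; elim/big_ind: _ => //.
      by move=> a b ha hb; rewrite le_max ha.
    move=> i hij; rewrite /completion; apply: addr_ge0.
      by apply: (le_trans _ (hr i j hij)); rewrite /=; case: ifP => _ //; exact: ltW nR_gt0.
    by rewrite divr_ge0 //; [exact: work_ge0 | exact: ltW (hs _ _ hij)].
  pose j0 : 'I_n := Ordinal n0.
  rewrite /objective (bigD1 j0) //= mul1r.
  have : n%:R <= job_completion T j0.
    have hj0 : @has_task R n I j0 j0 by rewrite has_taskE eqxx orbT.
    apply: (le_trans _ (@jc_ge T _ _ hj0 (hs _ _ hj0))).
    by have := hr _ _ hj0.
  move=> h1; rewrite -[X in X <= _]addr0; apply: lerD => //.
  by apply: sumr_ge0 => j _; rewrite mul1r.
have fS : feasible beta S.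
  split => //.
  - move=> i j j' jj' ; rewrite !has_taskE /completion /= /workf !divr1.
    case: (eqVneq (val j) 0%N) => hj; case: (eqVneq (val j') 0%N) => hj' /=.
    + by move: jj'; rewrite (val_inj (etrans hj (esym hj'))) eqxx.
    + by move=> _ _; right; rewrite add0r ler1n.
    + by move=> _ _; left; rewrite add0r ler1n.
    + move=> /eqP e1 /eqP e2; by move: jj'; rewrite -e1 -e2 eqxx.
  - by move=> i i' j; rewrite is_reduceF.
  - exact: energy_le.
split.
  apply: lb_le_inf; first by exists (objective S); exists S.
  by move=> x [T fT <-]; exact: lb.
apply: le_trans (ge_inf _ _) _.
- by exists 0 => x [T fT <-]; apply: le_trans (lb _ fT); exact: ltW nR_gt0.
- by exists S.
pose j0 : 'I_n := Ordinal n0.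
rewrite /objective (bigD1 j0) //= mul1r.
have -> : 2 * n%:R + 1 = (n%:R + 1) + n%:R :> R by ring.
apply: lerD.
  apply: jc_le; first by apply: addr_ge0 => //; exact: ltW nR_gt0.
  move=> i _; rewrite /completion /= /workf /= divr1; apply: lerD => //; exact: b_le1.
apply: (le_trans (_ : _ <= \sum_(j < n) (1:R)) _); last by rewrite sumr_const card_ord.
rewrite big_mkcond.
apply: ler_sum => j _; case: ifP => // hjj; rewrite mul1r.
have hj : (val j == 0%N) = false.
  by apply/negP => /eqP e; move: hjj; have -> : j = j0 by apply: val_inj.
apply: jc_le => // i _; rewrite /completion /= /workf hj.
by rewrite add0r divr1.
Qed.

Lemma OPTSR_ge (sigma : {perm 'I_n}) : smith_order I sigma ->
  n%:R * n%:R <= OPT_restricted beta I sigma.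
Proof.
move=> hsm.
pose j0 : 'I_n := Ordinal n0.
have hs0 : forall j, val j != 0%N -> (sigma j0 < sigma j)%N.
  move=> j hj; apply: hsm; rewrite !total_workE /= (negbTE hj) /=.
  rewrite /= divr1 invrK; lra.
pose S := @Schedule R n I
  (fun _ j => if val j == 0%N then n%:R else n%:R + (2 * n%:R)^-1) (fun _ _ => 1).
have fS : feasible beta S /\ respects_order sigma S.
  split; first split => //.
  - move=> i j j' jj' ; rewrite !has_taskE /completion /= /workf !divr1.
    case: (eqVneq (val j) 0%N) => hj; case: (eqVneq (val j') 0%N) => hj' /=.
    + by move: jj'; rewrite (val_inj (etrans hj (esym hj'))) eqxx.
    + by move=> _ _; left.
    + by move=> _ _; right.
    + move=> /eqP e1 /eqP e2; by move: jj'; rewrite -e1 -e2 eqxx.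
  - by move=> i j _ /=; case: (_ == _) => //.
  - by move=> i i' j; rewrite is_reduceF.
  - exact: energy_le.
  move=> i j j'; rewrite !has_taskE /completion /= /workf divr1.
  case: (eqVneq (val j) 0%N) => hj; case: (eqVneq (val j') 0%N) => hj' /=.
  + by move=> _ _; rewrite (val_inj (etrans hj (esym hj'))) ltnn.
  + by [].
  + move=> _ _; have -> : j' = j0 by apply: val_inj.
    by move=> /(ltn_trans (hs0 _ hj)); rewrite ltnn.
  + by move=> /eqP e1 /eqP e2; rewrite -e1 -e2 ltnn.
apply: lb_le_inf; first by exists (objective S); exists S.
move=> x [T [[hs _ hr _ _] hT] <-].
apply: obj_ge => j.
have hjj : @has_task R n I j j by rewrite has_taskE eqxx orbT.
apply: (le_trans _ (@jc_ge T _ _ hjj (hs _ _ hjj))).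
have hj0 : @has_task R n I j j0 by rewrite has_taskE eqxx.
have r0 := hr _ _ hj0; rewrite /= in r0.
case: (eqVneq (val j) 0%N) => hj.
  by have := hr _ _ hjj; rewrite /= hj eqxx.
apply: (le_trans r0); apply: (le_trans _ (hT _ _ _ hj0 hjj (hs0 _ hj))).
rewrite /completion lerDl divr_ge0 //; [exact: work_ge0 | exact: ltW (hs _ _ hj0)].
Qed.

End Proofs.

Theorem proposition4 (R : realType) (beta : R) (hbeta : 1 < beta) :
  exists (c : R) (N : nat) (I : forall n : nat, instance R n),
    0 < c /\
    forall n : nat, (N <= n)%N ->
      [/\ valid_instance (I n),
          0 < OPT beta (I n)
        & forall sigma : {perm 'I_n}, smith_order (I n) sigma ->
            c * n%:R * OPT beta (I n) <= OPT_restricted beta (I n) sigma].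
Proof.
exists (3^-1), 1%N, (inst R); split; first by rewrite invr_gt0.
move=> n hn.
have [h1 h2] := @OPT_ge R n beta hn.
have hnR : 1 <= n%:R :> R by rewrite ler1n.
split.
- exact: valid.
- lra.
- move=> sigma hs; have h3 := @OPTSR_ge R n beta hn sigma hs.
  apply: le_trans h3.
  have hO : 0 <= OPT beta (inst R n) by lra.
  have : 3^-1 * n%:R * OPT beta (inst R n) <= 3^-1 * n%:R * (2 * n%:R + 1).
    by apply: ler_wpM2l => //; apply: mulr_ge0 => //; lra.
  move=> h; apply: le_trans h _.
  nra.
Qed.
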